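(* Fix the data $N\ge 1$, $\hat s\in\{0,1\}^N$, $\hat y\in\{0,1\}^N$, $p\in\mathbb{R}_{\ge 0}^N$ and $\epsilon\ge 0$, and let $\mathcal{RC}$ and $\mathcal{RC}_\mathcal{E}$ be the two optimization problems defined in the context. Then the two problems have the same optimal solutions, in the following sense: (i) $\mathcal{RC}$ is feasible if and only if $\mathcal{RC}_\mathcal{E}$ is feasible, and in that case their optimal objective values coincide; (ii) for every optimal solution $(s_{01}^+,s_{10}^+,s_{01}^-,s_{10}^-)$ of $\mathcal{RC}_\mathcal{E}$, every vector $s^*$ obtained from it by the post-processing $\Phi$ is an optimal solution of $\mathcal{RC}$; (iii) every optimal solution $s^*$ of $\mathcal{RC}$ is obtained by the post-processing $\Phi$ from some optimal solution of $\mathcal{RC}_\mathcal{E}$ (namely from the tuple counting, in each of the four groups, how many entries of $\hat s$ were flipped in $s^*$).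
   Context: Data: an integer $N\ge1$; an initial guess $\hat s=(\hat s_1,\dots,\hat s_N)\in\{0,1\}^N$ of a binary sensitive attribute; predictions $\hat y=(\hat y_1,\dots,\hat y_N)\in\{0,1\}^N$; confidence weights $p=(p_1,\dots,p_N)$ with $p_i\ge0$; a tolerance $\epsilon\ge0$. Let $\bar y=\frac1N\sum_{i=1}^N\hat y_i$. Problem $\mathcal{RC}$ (general model): variables $s^*=(s^*_1,\dots,s^*_N)\in\{0,1\}^N$; minimize $\sum_{i=1}^N p_i(1-\hat s_i)s^*_i+\sum_{i=1}^N p_i\hat s_i(1-s^*_i)$ subject to $\sum_i s^*_i>0$, $\sum_i(1-s^*_i)>0$, $-\epsilon\le \bar y-\frac{\sum_i \hat y_i s^*_i}{\sum_i s^*_i}\le\epsilon$ and $-\epsilon\le \bar y-\frac{\sum_i \hat y_i (1-s^*_i)}{\sum_i (1-s^*_i)}\le\epsilon$ (statistical parity constraints). Four groups of indices: $G_1^+=\{i:\hat s_i=1,\hat y_i=1\}$, $G_0^+=\{i:\hat s_i=0,\hat y_i=1\}$, $G_1^-=\{i:\hat s_i=1,\hat y_i=0\}$, $G_0^-=\{i:\hat s_i=0,\hat y_i=0\}$, with cardinalities $n_1^+,n_0^+,n_1^-,n_0^-$. For each group $G$ with $|G|=n$, define the array $T_G[k]$ for $k=0,\dots,n$ as the sum of the $k$ smallest values among $\{p_i:i\in G\}$ (so $T_G[0]=0$); write $T_{1^+},T_{0^+},T_{1^-},T_{0^-}$. Problem $\mathcal{RC}_\mathcal{E}$ (efficient model):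 integer variables $s_{01}^+\in[0,n_0^+]$, $s_{10}^+\in[0,n_1^+]$, $s_{01}^-\in[0,n_0^-]$, $s_{10}^-\in[0,n_1^-]$; minimize $T_{0^+}[s_{01}^+]+T_{1^+}[s_{10}^+]+T_{0^-}[s_{01}^-]+T_{1^-}[s_{10}^-]$ subject to $n_0^++n_0^--s_{01}^+-s_{01}^-+s_{10}^++s_{10}^->0$, $n_1^++n_1^--s_{10}^+-s_{10}^-+s_{01}^++s_{01}^->0$, $-\epsilon\le\bar y-\frac{n_1^+-s_{10}^++s_{01}^+}{n_1^++n_1^--s_{10}^+-s_{10}^-+s_{01}^++s_{01}^-}\le\epsilon$, $-\epsilon\le\bar y-\frac{n_0^+-s_{01}^++s_{10}^+}{n_0^++n_0^--s_{01}^+-s_{01}^-+s_{10}^++s_{10}^-}\le\epsilon$. Post-processing $\Phi$: given a tuple $(s_{01}^+,s_{10}^+,s_{01}^-,s_{10}^-)$, obtain $s^*$ from $\hat s$ by flipping (changing $\hat s_i$ to $1-\hat s_i$) exactly $s_{01}^+$ indices of $G_0^+$, $s_{10}^+$ of $G_1^+$, $s_{01}^-$ of $G_0^-$ and $s_{10}^-$ of $G_1^-$, where in each group the flipped indices are ones with the smallest confidence values $p_i$ (ties broken arbitrarily, so the flipped set's total weight in group $G$ with $k$ flips equals $T_G[k]$); all other entries keep their value $\hat s_i$. *)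

(* Defs.v *)
From mathcomp Require Import all_boot all_order all_algebra.
Set Implicit Arguments. Unset Strict Implicit. Unset Printing Implicit Defensive.
Import Order.TTheory GRing.Theory Num.Theory.
Local Open Scope ring_scope.

Definition b2R {R : realFieldType} (b : bool) : R := (b : nat)%:R.

Definition ybar {R : realFieldType} (N : nat) (yhat : 'I_N -> bool) : R :=
  (\sum_i b2R (yhat i)) / N%:R.

Definition cost_RC (R : realFieldType) (N : nat) (shat yhat : 'I_N -> bool)
    (p : 'I_N -> R) (eps : R) (s : 'I_N -> bool) : R :=
  \sum_i p i * (1 - b2R (shat i)) * b2R (s i)
  + \sum_i p i * b2R (shat i) * (1 - b2R (s i)).

Definition feasible_RC (R : realFieldType) (N : nat) (shat yhat : 'I_N -> bool)
    (p : 'I_N -> R) (eps : R) (s : 'I_N -> bool) : Prop :=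
  let n1 : R := \sum_i b2R (s i) in
  let n0 : R := \sum_i (1 - b2R (s i)) in
  [/\ 0 < n1, 0 < n0,
      - eps <= ybar (R := R) yhat - (\sum_i b2R (yhat i) * b2R (s i)) / n1 <= eps
    & - eps <= ybar (R := R) yhat - (\sum_i b2R (yhat i) * (1 - b2R (s i))) / n0 <= eps].

Definition optimal_RC (R : realFieldType) (N : nat) (shat yhat : 'I_N -> bool)
    (p : 'I_N -> R) (eps : R) (s : 'I_N -> bool) : Prop :=
  feasible_RC shat yhat p eps s /\
  forall s', feasible_RC shat yhat p eps s' ->
    cost_RC shat yhat p eps s <= cost_RC shat yhat p eps s'.

Definition inG (N : nat) (shat yhat : 'I_N -> bool) (a b : bool) (i : 'I_N)
  : bool := (shat i == a) && (yhat i == b).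

Definition ncard (N : nat) (shat yhat : 'I_N -> bool) (a b : bool) : nat :=
  #|[pred i | inG shat yhat a b i]|.

Definition Tsum (R : realFieldType) (N : nat) (shat yhat : 'I_N -> bool)
    (p : 'I_N -> R) (a b : bool) (k : nat) : R :=
  \sum_(x <- take k (sort <=%R [seq p i | i <- enum 'I_N & inG shat yhat a b i])) x.

(* ---------- the efficient model RC_E ----------
   k01p = s_01^+ (flips in G_0^+), k10p = s_10^+ (flips in G_1^+),
   k01m = s_01^- (flips in G_0^-), k10m = s_10^- (flips in G_1^-). *)
Definition cost_RCE (R : realFieldType) (N : nat) (shat yhat : 'I_N -> bool)
    (p : 'I_N -> R) (eps : R) (k01p k10p k01m k10m : nat) : R :=
  Tsum shat yhat p false true k01p + Tsum shat yhat p true true k10p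
  + Tsum shat yhat p false false k01m + Tsum shat yhat p true false k10m.

Definition feasible_RCE (R : realFieldType) (N : nat) (shat yhat : 'I_N -> bool)
    (p : 'I_N -> R) (eps : R) (k01p k10p k01m k10m : nat) : Prop :=
  let n1p : R := (ncard shat yhat true true)%:R in
  let n0p : R := (ncard shat yhat false true)%:R in
  let n1m : R := (ncard shat yhat true false)%:R in
  let n0m : R := (ncard shat yhat false false)%:R in
  let D0 : R := n0p + n0m - k01p%:R - k01m%:R + k10p%:R + k10m%:R in
  let D1 : R := n1p + n1m - k10p%:R - k10m%:R + k01p%:R + k01m%:R in
  [/\ [&& (k01p <= ncard shat yhat false true)%N,
          (k10p <= ncard shat yhat true true)%N,
          (k01m <= ncard shat yhat false false)%N &
          (k10m <= ncard shat yhat true false)%N],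
      0 < D0, 0 < D1,
      - eps <= ybar (R := R) yhat - (n1p - k10p%:R + k01p%:R) / D1 <= eps
    & - eps <= ybar (R := R) yhat - (n0p - k01p%:R + k10p%:R) / D0 <= eps].

Definition optimal_RCE (R : realFieldType) (N : nat) (shat yhat : 'I_N -> bool)
    (p : 'I_N -> R) (eps : R) (k01p k10p k01m k10m : nat) : Prop :=
  feasible_RCE shat yhat p eps k01p k10p k01m k10m /\
  forall l01p l10p l01m l10m, feasible_RCE shat yhat p eps l01p l10p l01m l10m ->
    cost_RCE shat yhat p eps k01p k10p k01m k10m
      <= cost_RCE shat yhat p eps l01p l10p l01m l10m.

(* Since every index lies in exactly one group, all
   non-flipped entries keep the value shat_i. *)
Definition phi_group (R : realFieldType) (N : nat) (shat yhat : 'I_N -> bool)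
    (p : 'I_N -> R) (a b : bool) (k : nat) (s : 'I_N -> bool) : Prop :=
  #|[pred i | inG shat yhat a b i && (s i != shat i)]| = k /\
  forall i j, inG shat yhat a b i -> inG shat yhat a b j ->
    s i != shat i -> s j = shat j -> p i <= p j.

Definition is_Phi (R : realFieldType) (N : nat) (shat yhat : 'I_N -> bool)
    (p : 'I_N -> R) (eps : R) (k01p k10p k01m k10m : nat) (s : 'I_N -> bool)
  : Prop :=
  [/\ phi_group shat yhat p false true k01p s,
      phi_group shat yhat p true true k10p s,
      phi_group shat yhat p false false k01m s &
      phi_group shat yhat p true false k10m s].

(* Main.v *)
Require Import Defs.
From mathcomp Require Import all_boot all_order all_algebra.
From mathcomp Require Import ring lra.
From Stdlib Require Import Classical FunctionalExtensionality.
Set Implicit Arguments. Unset Strict Implicit. Unset Printing Implicit Defensive.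
Import Order.TTheory GRing.Theory Num.Theory.
Local Open Scope ring_scope.


Lemma exists_min (R : realFieldType) (T : finType) (P : T -> Prop) (f : T -> R) :
  (exists x, P x) -> exists x, P x /\ forall y, P y -> f x <= f y.
Proof.
case=> x0 Px0.
pose A x := [set y | f y < f x].
suff H : forall n x, P x -> (#|A x| <= n)%N ->
  exists x, P x /\ forall y, P y -> f x <= f y by exact: (H _ x0 Px0 (leqnn _)).
elim=> [|n IH] x Px hn; (case: (classic (exists y, P y /\ f y < f x)) => [[y [Py lt]]|nex];
  last by exists x; split=> // y Py; rewrite leNgt; apply/negP=> lt; apply: nex; exists y).
- have: (0 < #|A x|)%N by apply/card_gt0P; exists y; rewrite inE.
  by rewrite lt0n -leqn0 hn.
- apply: (IH y Py); rewrite -ltnS; apply: (leq_trans _ hn); apply: proper_card.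
  apply/properP; split.
    by apply/subsetP=> z; rewrite !inE => h; apply: lt_trans h lt.
  by exists y; rewrite !inE ?lt // ltxx.
Qed.


Section TS.
Variables (R : realFieldType) (N : nat) (p : 'I_N -> R) (g : pred 'I_N).

Definition TS k := \sum_(x <- take k (sort <=%R [seq p i | i <- enum 'I_N & g i])) x.

Definition compl (X : {set 'I_N}) := forall i j, i \in X -> g j -> j \notin X -> p i <= p j.

Lemma TS_eq (X : {set 'I_N}) : {subset X <= g} -> compl X -> TS #|X| = \sum_(i in X) p i.
Proof.
move=> sXg cX; rewrite /TS.
set Y := [set i | g i & i \notin X].
set l1 := [seq p i | i <- enum X]; set l2 := [seq p i | i <- enum Y].
have pl : perm_eq [seq p i | i <- enum 'I_N & g i] (l1 ++ l2).
  rewrite /l1 /l2 -map_cat; apply: perm_map; apply: uniq_perm.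
  - by rewrite filter_uniq // enum_uniq.
  - rewrite cat_uniq !enum_uniq /= andbT; apply/hasPn => i; rewrite !mem_enum !inE.
    by case/andP=> _ ->.
  - move=> i; rewrite mem_filter mem_cat !mem_enum !inE.
    case: (boolP (i \in X)) => iX /=; last by [].
    by rewrite andbT; exact: (sXg _ iX).
have so : sort <=%R [seq p i | i <- enum 'I_N & g i] = sort <=%R l1 ++ sort <=%R l2.
  apply: le_sorted_eq; first by apply: sort_sorted; exact: le_total.
    rewrite sorted_pairwise; last exact: le_trans.
    rewrite pairwise_cat -!sorted_pairwise; try exact: le_trans.
    rewrite !sort_sorted ?andbT //; try exact: le_total.
    apply/allrelP => x y; rewrite !mem_sort => /mapP[i iX ->] /mapP[j jY ->].
    move: iX jY; rewrite !mem_enum !inE => iX /andP[gj jX]; exact: cX.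
  rewrite perm_sort; apply: (perm_trans pl).
  by rewrite perm_cat // perm_sym perm_sort.
rewrite so take_size_cat; last by rewrite size_sort size_map cardE.
have ps : perm_eq (sort <=%R l1) l1 by rewrite perm_sort.
by rewrite (perm_big _ ps) big_map big_enum.
Qed.


Lemma subset_k (G : {set 'I_N}) k : (k <= #|G|)%N -> exists X : {set 'I_N}, X \subset G /\ #|X| = k.
Proof.
elim: k => [|k IH] hk; first by exists set0; split; [exact: sub0set | exact: cards0].
have [X [sXG cX]] := IH (ltnW hk).
have : (0 < #|G :\: X|)%N by rewrite cardsD (setIidPr sXG) subn_gt0 cX.
case/card_gt0P=> x; rewrite inE => /andP[xX xG].
exists (x |: X); rewrite subUset sub1set xG sXG cardsU1 xX cX; split=> //.
Qed.

Lemma swap_card (X : {set 'I_N}) i j : i \in X -> j \notin X -> #|j |: (X :\ i)| = #|X|.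
Proof.
move=> iX jX; rewrite cardsU1 inE negb_and jX orbT /=.
by rewrite (cardsD1 i X) iX.
Qed.

Lemma swap_sum (X : {set 'I_N}) i j : i \in X -> j \notin X ->
  \sum_(x in j |: (X :\ i)) p x = \sum_(x in X) p x - p i + p j.
Proof.
move=> iX jX; rewrite big_setU1 /=; last by rewrite inE negb_and jX orbT.
rewrite (bigD1 i iX) /=.
have -> : \sum_(x in X :\ i) p x = \sum_(x in X | x != i) p x.
  by apply: eq_bigl => x; rewrite !inE andbC.
rewrite addrC; congr (_ + _); rewrite (addrC (p i)) addrK.
by [].
Qed.

Let G := [set i | g i].

Lemma TS_exists k : (k <= #|G|)%N -> exists X : {set 'I_N}, [/\ X \subset G, #|X| = k, compl X &
  forall Y : {set 'I_N}, Y \subset G -> #|Y| = k -> \sum_(i in X) p i <= \sum_(i in Y) p i].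
Proof.
move=> hk.
have [X [[sXG cX] mX]] := @exists_min _ _ (fun Y : {set 'I_N} => Y \subset G /\ #|Y| = k)
  (fun Y : {set 'I_N} => \sum_(i in Y) p i) (subset_k hk).
exists X; split=> //; last by move=> Y sYG cY; apply: mX.
move=> i j iX gj jX; rewrite leNgt; apply/negP=> lt.
have := mX (j |: (X :\ i)); rewrite subUset sub1set inE gj swap_card //.
rewrite (subset_trans (subsetDl _ _) sXG) swap_sum // => /(_ (conj isT cX)).
move=> h; suff: False by []; clear -h lt; lra.
Qed.

Lemma TS_le (X : {set 'I_N}) : X \subset G -> TS #|X| <= \sum_(i in X) p i.
Proof.
move=> sXG; have [X0 [sX0 cX0 coX0 m]] := TS_exists (subset_leq_card sXG).
rewrite -cX0 TS_eq // ?cX0; last by move=> x /(subsetP sX0); rewrite inE.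
exact: m.
Qed.

Lemma TS_compl (X : {set 'I_N}) : X \subset G -> \sum_(i in X) p i <= TS #|X| -> compl X.
Proof.
move=> sXG hle i j iX gj jX; rewrite leNgt; apply/negP=> lt.
have sY : j |: (X :\ i) \subset G.
  by rewrite subUset sub1set inE gj (subset_trans (subsetDl _ _) sXG).
have := TS_le sY; rewrite swap_card // swap_sum //.
move=> h; have := le_trans hle h; move=> h2; suff: False by []; clear -h2 lt; lra.
Qed.

End TS.

Section Main.
Variables (R : realFieldType) (N : nat) (shat yhat : 'I_N -> bool) (p : 'I_N -> R) (eps : R).

Definition Gs a b := [set i | inG shat yhat a b i].
Definition Fs (s : 'I_N -> bool) := [set i | s i != shat i].
Definition cnt s a b := #|Fs s :&: Gs a b|.
Definition ind (X : {set 'I_N}) i : R := (i \in X)%:R.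
Definition W (X : {set 'I_N}) := \sum_(i in X) p i.

Lemma sum_ind X : \sum_i ind X i = #|X|%:R.
Proof.
transitivity (\sum_(i in X) (1 : R)); last by rewrite sumr_const.
by rewrite [RHS]big_mkcond; apply: eq_bigr => i _; rewrite /ind; case: (i \in X).
Qed.

Lemma sum_pind X : \sum_i p i * ind X i = W X.
Proof.
rewrite /W [RHS]big_mkcond; apply: eq_bigr => i _; rewrite /ind.
by case: (i \in X); rewrite ?mulr1 ?mulr0.
Qed.

Lemma ncardE a b : ncard shat yhat a b = #|Gs a b|.
Proof. by rewrite /ncard /Gs cardsE. Qed.

Lemma cnt_le s a b : (cnt s a b <= ncard shat yhat a b)%N.
Proof. by rewrite ncardE; apply: subset_leq_card; apply: subsetIr. Qed.

Notation c s a b i := (ind (Fs s :&: Gs a b) i).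
Notation gg a b i := (ind (Gs a b) i).

Lemma pw1 s i : b2R (s i) =
  gg true true i + gg true false i - c s true true i - c s true false i
  + c s false true i + c s false false i.
Proof.
rewrite /b2R /ind !inE /inG.
by case: (shat i); case: (yhat i); case: (s i) => /=; ring.
Qed.

Lemma pw0 s i : 1 - b2R (s i) =
  gg false true i + gg false false i - c s false true i - c s false false i
  + c s true true i + c s true false i.
Proof.
rewrite /b2R /ind !inE /inG.
by case: (shat i); case: (yhat i); case: (s i) => /=; ring.
Qed.

Lemma pwy1 s i : b2R (yhat i) * b2R (s i) =
  gg true true i - c s true true i + c s false true i.
Proof.
rewrite /b2R /ind !inE /inG.
by case: (shat i); case: (yhat i); case: (s i) => /=; ring.
Qed.

Lemma pwy0 s i : b2R (yhat i) * (1 - b2R (s i)) =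
  gg false true i - c s false true i + c s true true i.
Proof.
rewrite /b2R /ind !inE /inG.
by case: (shat i); case: (yhat i); case: (s i) => /=; ring.
Qed.

Lemma pwc s i : p i * (1 - b2R (shat i)) * b2R (s i) + p i * b2R (shat i) * (1 - b2R (s i))
  = p i * c s false true i + p i * c s true true i + p i * c s false false i + p i * c s true false i.
Proof.
rewrite /b2R /ind !inE /inG.
by case: (shat i); case: (yhat i); case: (s i) => /=; ring.
Qed.


Lemma sum1 s : \sum_i b2R (R:=R) (s i) =
  (ncard shat yhat true true)%:R + (ncard shat yhat true false)%:R
  - (cnt s true true)%:R - (cnt s true false)%:R + (cnt s false true)%:R + (cnt s false false)%:R.
Proof.
by rewrite (eq_bigr _ (fun i _ => pw1 s i)) !big_split /= ?sumrB ?sumrN !sum_ind !ncardE.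
Qed.

Lemma sum0 s : \sum_i (1 - b2R (R:=R) (s i)) =
  (ncard shat yhat false true)%:R + (ncard shat yhat false false)%:R
  - (cnt s false true)%:R - (cnt s false false)%:R + (cnt s true true)%:R + (cnt s true false)%:R.
Proof.
by rewrite (eq_bigr _ (fun i _ => pw0 s i)) !big_split /= ?sumrB ?sumrN !sum_ind !ncardE.
Qed.

Lemma sumy1 s : \sum_i b2R (R:=R) (yhat i) * b2R (s i) =
  (ncard shat yhat true true)%:R - (cnt s true true)%:R + (cnt s false true)%:R.
Proof.
by rewrite (eq_bigr _ (fun i _ => pwy1 s i)) !big_split /= ?sumrB ?sumrN !sum_ind !ncardE.
Qed.

Lemma sumy0 s : \sum_i b2R (R:=R) (yhat i) * (1 - b2R (s i)) =
  (ncard shat yhat false true)%:R - (cnt s false true)%:R + (cnt s true true)%:R.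
Proof.
by rewrite (eq_bigr _ (fun i _ => pwy0 s i)) !big_split /= ?sumrB ?sumrN !sum_ind !ncardE.
Qed.

Lemma feasE s : feasible_RC shat yhat p eps s <->
  feasible_RCE shat yhat p eps (cnt s false true) (cnt s true true) (cnt s false false) (cnt s true false).
Proof.
rewrite /feasible_RC /feasible_RCE; cbv zeta.
rewrite sum1 sum0 sumy1 sumy0.
split=> [[h1 h0 c1 c0] | [_ h0 h1 c1 c0]]; split=> //.
by rewrite !cnt_le.
Qed.

Lemma costE s : cost_RC shat yhat p eps s =
  W (Fs s :&: Gs false true) + W (Fs s :&: Gs true true)
  + W (Fs s :&: Gs false false) + W (Fs s :&: Gs true false).
Proof.
rewrite /cost_RC -big_split /= (eq_bigr _ (fun i _ => pwc s i)) !big_split /=.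
by rewrite !sum_pind.
Qed.

Lemma TsumE a b k : Tsum shat yhat p a b k = TS p (inG shat yhat a b) k.
Proof. by []. Qed.

Lemma phiE s a b k : phi_group shat yhat p a b k s <->
  cnt s a b = k /\ compl p (inG shat yhat a b) (Fs s :&: Gs a b).
Proof.
have ce : #|[pred i | inG shat yhat a b i && (s i != shat i)]| = cnt s a b.
  by apply: eq_card => i; rewrite !inE andbC.
rewrite /phi_group ce; split=> [[-> h]|[-> h]]; split=> //.
  move=> i j; rewrite !inE => /andP[si gi] gj; rewrite gj andbT negbK => /eqP sj.
  exact: h.
move=> i j gi gj si sj; apply: h => //; first by rewrite !inE si.
by rewrite !inE gj sj eqxx.
Qed.

Lemma build (X : bool -> bool -> {set 'I_N}) : (forall a b, X a b \subset Gs a b) ->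
  exists s, forall a b, Fs s :&: Gs a b = X a b.
Proof.
move=> sX; exists (fun i => if i \in X (shat i) (yhat i) then ~~ shat i else shat i).
move=> a b; apply/setP=> i.
have -> : (i \in X a b) = (i \in X a b) && (i \in Gs a b).
  by case: (boolP (i \in X a b)) => // /(subsetP (sX a b)) ->.
rewrite !inE /inG.
have -> : ((if i \in X (shat i) (yhat i) then ~~ shat i else shat i) != shat i)
  = (i \in X (shat i) (yhat i)) by case: (i \in X _ _); case: (shat i).
by case: eqP => [->|]; case: eqP => [->|] /=; rewrite ?andbF.
Qed.


Lemma Kcost_le s : cost_RCE shat yhat p eps (cnt s false true) (cnt s true true)
   (cnt s false false) (cnt s true false) <= cost_RC shat yhat p eps s.
Proof.
rewrite costE /cost_RCE !TsumE.
by do 3?apply: lerD; apply: TS_le; apply: subsetIr.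
Qed.

Lemma grp s a b k X : Fs s :&: Gs a b = X -> X \subset Gs a b -> #|X| = k ->
  compl p (inG shat yhat a b) X ->
  phi_group shat yhat p a b k s /\ W (Fs s :&: Gs a b) = Tsum shat yhat p a b k.
Proof.
move=> e sX cX co; split; first by apply/phiE; rewrite /cnt e.
rewrite e -cX TsumE TS_eq //; move=> x /(subsetP sX); by rewrite inE.
Qed.

Lemma realize l1 l2 l3 l4 :
  (l1 <= ncard shat yhat false true)%N -> (l2 <= ncard shat yhat true true)%N ->
  (l3 <= ncard shat yhat false false)%N -> (l4 <= ncard shat yhat true false)%N ->
  exists s, is_Phi shat yhat p eps l1 l2 l3 l4 s /\
    cost_RC shat yhat p eps s = cost_RCE shat yhat p eps l1 l2 l3 l4.
Proof.
rewrite !ncardE => h1 h2 h3 h4.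
have [X1 [s1 c1 o1 _]] := TS_exists p h1.
have [X2 [s2 c2 o2 _]] := TS_exists p h2.
have [X3 [s3 c3 o3 _]] := TS_exists p h3.
have [X4 [s4 c4 o4 _]] := TS_exists p h4.
pose Xf a b := match a, b with false, true => X1 | true, true => X2
  | false, false => X3 | true, false => X4 end.
have [s es] := @build Xf (fun a b => match a, b with false, true => s1 | true, true => s2
  | false, false => s3 | true, false => s4 end).
have [g1 w1] := grp (es false true) s1 c1 o1.
have [g2 w2] := grp (es true true) s2 c2 o2.
have [g3 w3] := grp (es false false) s3 c3 o3.
have [g4 w4] := grp (es true false) s4 c4 o4.
exists s; split; first by split.
by rewrite costE w1 w2 w3 w4.
Qed.

Lemma phi_cost l1 l2 l3 l4 s : is_Phi shat yhat p eps l1 l2 l3 l4 s ->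
  [/\ cnt s false true = l1, cnt s true true = l2, cnt s false false = l3,
      cnt s true false = l4 &
    cost_RC shat yhat p eps s = cost_RCE shat yhat p eps l1 l2 l3 l4].
Proof.
case=> /phiE[e1 o1] /phiE[e2 o2] /phiE[e3 o3] /phiE[e4 o4]; split=> //.
rewrite costE /cost_RCE -e1 -e2 -e3 -e4 !TsumE /cnt.
by rewrite !TS_eq //; move=> x; rewrite !inE => /andP[].
Qed.

Lemma optRC_RCE s : optimal_RC shat yhat p eps s ->
  optimal_RCE shat yhat p eps (cnt s false true) (cnt s true true)
   (cnt s false false) (cnt s true false).
Proof.
case=> fs ms; split; first exact/feasE.
move=> l1 l2 l3 l4 fl.
have [/and4P[b1 b2 b3 b4] _ _ _ _] := fl.
have [s' [ph ce]] := realize b1 b2 b3 b4.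
have [e1 e2 e3 e4 _] := phi_cost ph.
rewrite -ce; apply: le_trans (Kcost_le s) _; apply: ms.
by apply/feasE; rewrite e1 e2 e3 e4.
Qed.

Lemma optRC_phi s : optimal_RC shat yhat p eps s ->
  is_Phi shat yhat p eps (cnt s false true) (cnt s true true)
   (cnt s false false) (cnt s true false) s.
Proof.
move=> os; have [fs ms] := os.
have [/and4P[b1 b2 b3 b4] _ _ _ _] := (feasE s).1 fs.
have [s' [ph ce]] := realize b1 b2 b3 b4.
have [e1 e2 e3 e4 _] := phi_cost ph.
have fs' : feasible_RC shat yhat p eps s' by apply/(feasE s'); rewrite e1 e2 e3 e4; exact/feasE.
have := ms _ fs'; rewrite ce costE /cost_RCE !TsumE => H.
have L1 := TS_le p (subsetIr (Fs s) (Gs false true)).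
have L2 := TS_le p (subsetIr (Fs s) (Gs true true)).
have L3 := TS_le p (subsetIr (Fs s) (Gs false false)).
have L4 := TS_le p (subsetIr (Fs s) (Gs true false)).
rewrite /W /cnt in H *.
split; apply/phiE; (split; first by []); (apply: TS_compl; first exact: subsetIr); clear -H L1 L2 L3 L4; lra.
Qed.


Lemma main_sec :
  [/\
    ((exists s, feasible_RC shat yhat p eps s) <->
     (exists k01p k10p k01m k10m,
        feasible_RCE shat yhat p eps k01p k10p k01m k10m)),
    ((exists s, feasible_RC shat yhat p eps s) ->
       (exists s, optimal_RC shat yhat p eps s) /\
       (exists k01p k10p k01m k10m,
          optimal_RCE shat yhat p eps k01p k10p k01m k10m)),
    (forall s k01p k10p k01m k10m,
       optimal_RC shat yhat p eps s ->
       optimal_RCE shat yhat p eps k01p k10p k01m k10m ->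
       cost_RC shat yhat p eps s = cost_RCE shat yhat p eps k01p k10p k01m k10m),
    (forall k01p k10p k01m k10m s,
       optimal_RCE shat yhat p eps k01p k10p k01m k10m ->
       is_Phi shat yhat p eps k01p k10p k01m k10m s ->
       optimal_RC shat yhat p eps s)
  & (forall s, optimal_RC shat yhat p eps s ->
       exists k01p k10p k01m k10m,
         optimal_RCE shat yhat p eps k01p k10p k01m k10m /\
         is_Phi shat yhat p eps k01p k10p k01m k10m s)].
Proof.
split.
- split=> [[s fs] | [l1 [l2 [l3 [l4 fl]]]]].
    by exists (cnt s false true), (cnt s true true), (cnt s false false), (cnt s true false);
      exact/feasE.
  have [/and4P[b1 b2 b3 b4] _ _ _ _] := fl.
  have [s [ph _]] := realize b1 b2 b3 b4.
  have [e1 e2 e3 e4 _] := phi_cost ph.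
  by exists s; apply/feasE; rewrite e1 e2 e3 e4.
- move=> [s fs].
  have ffE (t : 'I_N -> bool) : fun_of_fin [ffun i => t i] = t.
    by apply: functional_extensionality => i; rewrite ffunE.
  have [f [ff mf]] := @exists_min R _
     (fun f : {ffun 'I_N -> bool} => feasible_RC shat yhat p eps f)
     (fun f : {ffun 'I_N -> bool} => cost_RC shat yhat p eps f)
     (ex_intro _ [ffun i => s i] (eq_ind_r (fun t => feasible_RC shat yhat p eps t) fs (ffE s))).
  have os : optimal_RC shat yhat p eps f.
    split=> // s' fs'; have := mf [ffun i => s' i]; rewrite ffE; exact.
  split; first by exists f.
  exists (cnt f false true), (cnt f true true), (cnt f false false), (cnt f true false).
  exact: optRC_RCE.
- move=> s l1 l2 l3 l4 os ol; apply: le_anti; apply/andP; split.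
    have [/and4P[b1 b2 b3 b4] _ _ _ _] := ol.1.
    have [s' [ph ce]] := realize b1 b2 b3 b4.
    have [e1 e2 e3 e4 _] := phi_cost ph.
    rewrite -ce; apply: os.2; apply/feasE; rewrite e1 e2 e3 e4; exact: ol.1.
  apply: le_trans (Kcost_le s); apply: ol.2; exact/feasE/os.1.
- move=> l1 l2 l3 l4 s ol ph.
  have [e1 e2 e3 e4 ce] := phi_cost ph.
  have fs : feasible_RC shat yhat p eps s by apply/feasE; rewrite e1 e2 e3 e4; exact: ol.1.
  split=> // s' fs'; rewrite ce; apply: le_trans (Kcost_le s'); apply: ol.2; exact/feasE.
- move=> s os.
  exists (cnt s false true), (cnt s true true), (cnt s false false), (cnt s true false).
  by split; [exact: optRC_RCE | exact: optRC_phi].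
Qed.

End Main.

Theorem theorem1 (R : realFieldType) (N : nat) (shat yhat : 'I_N -> bool)
    (p : 'I_N -> R) (eps : R) :
  (0 < N)%N -> (forall i, 0 <= p i) -> 0 <= eps ->
  [/\
    (* (i) RC is feasible iff RC_E is feasible *)
    ((exists s, feasible_RC shat yhat p eps s) <->
     (exists k01p k10p k01m k10m,
        feasible_RCE shat yhat p eps k01p k10p k01m k10m)),
    (* when feasible, both (finite) problems attain their optimum *)
    ((exists s, feasible_RC shat yhat p eps s) ->
       (exists s, optimal_RC shat yhat p eps s) /\
       (exists k01p k10p k01m k10m,
          optimal_RCE shat yhat p eps k01p k10p k01m k10m)),
    (* (i) the optimal objective values coincide *)
    (forall s k01p k10p k01m k10m,
       optimal_RC shat yhat p eps s ->
       optimal_RCE shat yhat p eps k01p k10p k01m k10m ->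
       cost_RC shat yhat p eps s = cost_RCE shat yhat p eps k01p k10p k01m k10m),
    (* (ii) Phi maps optimal solutions of RC_E to optimal solutions of RC *)
    (forall k01p k10p k01m k10m s,
       optimal_RCE shat yhat p eps k01p k10p k01m k10m ->
       is_Phi shat yhat p eps k01p k10p k01m k10m s ->
       optimal_RC shat yhat p eps s)
  & (* (iii) every optimal solution of RC is obtained via Phi from an optimal
       solution of RC_E (necessarily the tuple of flip counts per group) *)
    (forall s, optimal_RC shat yhat p eps s ->
       exists k01p k10p k01m k10m,
         optimal_RCE shat yhat p eps k01p k10p k01m k10m /\
         is_Phi shat yhat p eps k01p k10p k01m k10m s)].
Proof. by move=> _ _ _; exact: main_sec. Qed.
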